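(* Let $G$ be a simple graph with $m$ edges and girth $g(G)\ge 4$. Define $\varrho_1(G)=\sum_{uv\in E(G)} m(G-\{u,v\})\,M_1(G-\{u,v\})$, where $m(H)$ is the number of edges of $H$. Then $$\varrho_1(G)=(m^2+4m+5)M_1(G)-(m+2)F(G)-(4m+6)M_2(G)+M_1^4(G)-M_1(G)^2+\alpha(G)-2m^2-2m+2\gamma(G),$$ where $M_1(G)^2$ denotes the square of the number $M_1(G)$.
   Context: All graphs are finite, simple and undirected; $d_G(v)$ is the degree of $v$; $G-\{u,v\}$ is obtained by deleting vertices $u,v$. $M_1^\alpha(G)=\sum_{v}d_G(v)^\alpha$ (exponent on degrees), $M_1=M_1^2$, $F=M_1^3$; $M_2(G)=\sum_{uv\in E(G)}d_G(u)d_G(v)$; $\alpha(G)=\sum_{uv\in E(G)}d_G(u)d_G(v)[d_G(u)+d_G(v)]$. A vertex $v$ is said to be incident to an edge $e=xy$ (with $v\ne x,y$) if $\{vx,vy\}\cap E(G)\neq\emptyset$; $\Lambda(G)$ is the set of all pairs $\{v,e\}$ with $v\in V(G)$, $e\in E(G)$ and $v$ incident to $e$ in this sense; and $\gamma(G)=\sum_{\{v,xy\}\in\Lambda(G)}d_G(v)\big[d_G(x)+d_G(y)\big]$. *)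

(* Defs.v *)
From mathcomp Require Import all_boot all_order all_algebra.
Set Implicit Arguments. Unset Strict Implicit. Unset Printing Implicit Defensive.

Section Graph.
Variables (T : finType) (e : rel T).

Definition simple_graph : Prop := symmetric e /\ irreflexive e.

(* girth >= 4: no triangles (a forest has infinite girth) *)
Definition girth_ge4 : Prop := forall x y z : T, e x y -> e y z -> ~~ e x z.

(* Sum of F x y over the edges xy of the subgraph induced on D
   (each unordered edge counted once, via the enumeration order of T). *)
Definition edge_sum_in (D : {set T}) (F : T -> T -> nat) : nat :=
  \sum_(x in D) \sum_(y in D | e x y && (enum_rank x < enum_rank y)%N) F x y.

Definition deg_in (D : {set T}) (v : T) : nat := #|[set w in D | e v w]|.

Definition size_in (D : {set T}) : nat := edge_sum_in D (fun _ _ => 1%N).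

Definition M1a_in (a : nat) (D : {set T}) : nat := \sum_(v in D) deg_in D v ^ a.

Definition deg (v : T) : nat := deg_in setT v.
Definition nedges : nat := size_in setT.
Definition M1a (a : nat) : nat := M1a_in a setT.
Definition M1 : nat := M1a 2.
Definition Fidx : nat := M1a 3.
Definition M2 : nat := edge_sum_in setT (fun x y => deg x * deg y).
Definition alpha_idx : nat :=
  edge_sum_in setT (fun x y => deg x * deg y * (deg x + deg y)).

Definition incident (v x y : T) : bool := [&& v != x, v != y & e v x || e v y].

(* gamma(G) = sum over pairs {v, xy} in Lambda(G) of d(v)(d(x)+d(y)) *)
Definition gamma_idx : nat :=
  edge_sum_in setT (fun x y =>
    \sum_(v | incident v x y) deg v * (deg x + deg y)).

(* G - {u,v} is the subgraph induced on V \ {u,v} *)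
Definition rho1 : nat :=
  edge_sum_in setT (fun u v =>
    size_in (~: [set u; v]) * M1a_in 2 (~: [set u; v])).

End Graph.

(* Main.v *)
Set Warnings "-notation-overridden,-ambiguous-paths,-notation-incompatible-prefix".
Require Import Defs.
From mathcomp Require Import all_boot all_order all_algebra.
From mathcomp Require Import ring zify.
Import GRing.Theory Num.Theory.
Local Open Scope ring_scope.

Section S.
Variables (T : finType) (e : rel T).
Hypotheses (esym : symmetric e) (eirr : irreflexive e).

Lemma handshake (D : {set T}) (F : T -> T -> nat) :
  (forall x y, F x y = F y x) ->
  (2 * edge_sum_in e D F = \sum_(x in D) \sum_(y in D | e x y) F x y)%N.
Proof.
move=> Fs; rewrite /edge_sum_in mul2n -addnn.
have -> : (\sum_(x in D) \sum_(y in D | e x y) F x y =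
   \sum_(x in D) \sum_(y in D | e x y && (enum_rank x < enum_rank y)%N) F x y +
   \sum_(x in D) \sum_(y in D | e x y && (enum_rank y < enum_rank x)%N) F x y)%N.
  rewrite -big_split /=; apply: eq_bigr => x xD.
  rewrite (bigID (fun y => (enum_rank x < enum_rank y)%N)) /=; congr (_ + _)%N;
  apply: eq_bigl => y; case: (boolP (e x y)) => exy; rewrite ?andbT ?andbF //=.
  congr (_ && _); rewrite -leqNgt leq_eqVlt; case: eqP => //= H.
  by have := enum_rank_inj (val_inj H) => H1; subst y; rewrite eirr in exy.
congr (_ + _)%N.
rewrite big_mkcond [RHS]big_mkcond /=.
under eq_bigr => x _ do rewrite big_mkcond /=.
under [RHS]eq_bigr => x _ do rewrite big_mkcond /=.
have ifs : forall (b : bool) (f : T -> nat), (if b then \sum_i f i else 0)%N = \sum_i (if b then f i else 0)%N.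
  by move=> [] f //; rewrite big1.
under eq_bigr => x _ do rewrite ifs.
under [RHS]eq_bigr => x _ do rewrite ifs.
rewrite exchange_big /=.
apply: eq_bigr => x _; apply: eq_bigr => y _.
case: (x \in D); case: (y \in D) => //=; rewrite esym Fs //.
Qed.

Definition ab (b : bool) : int := (b : nat)%:Z.
Lemma abT : ab true = 1. Proof. by []. Qed.
Lemma abF : ab false = 0. Proof. by []. Qed.

Lemma sumZ (I : finType) (P : pred I) (F : I -> nat) :
  ((\sum_(i | P i) F i)%N)%:Z = \sum_(i | P i) (F i)%:Z.
Proof. by rewrite (big_morph Posz PoszD (erefl (Posz 0))). Qed.

Lemma deg_inZ (D : {set T}) x : (deg_in e D x)%:Z = \sum_(w in D) ab (e x w).
Proof.
rewrite /deg_in -sum1_card sumZ big_mkcond [RHS]big_mkcond /=.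
apply: eq_bigr => w _; rewrite !inE; by case: (w \in D); case: (e x w).
Qed.

Lemma sum_compl2 u v (f : T -> int) : u != v ->
  \sum_(w in ~: [set u; v]) f w = \sum_w f w - f u - f v.
Proof.
move=> uv; rewrite [\sum_w f w](bigD1 u) //= [\sum_(i | i != u) f i](bigD1 v) /=; last by rewrite eq_sym.
have -> : \sum_(i | (i != u) && (i != v)) f i = \sum_(w in ~: [set u; v]) f w.
  by apply: eq_bigl => w; rewrite !inE negb_or.
ring.
Qed.

Lemma sum_eq1 u (f : T -> int) : \sum_w ab (w == u) * f w = f u.
Proof.
rewrite (bigD1 u) //= eqxx big1 ?addr0 ?abT ?mul1r // => w /negbTE ->.
by rewrite abF mul0r.
Qed.


Hypothesis (girth : girth_ge4 e).

Lemma PoszX (n k : nat) : ((n ^ k)%N)%:Z = n%:Z ^+ k.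
Proof. by rewrite -!natz natrX. Qed.

Definition d x : int := (deg e x)%:Z.
Definition Lsum (F : T -> T -> int) : int := \sum_x \sum_y ab (e x y) * F x y.
Definition Sn x : int := \sum_w ab (e x w) * d w.

Lemma sumsetT (f : T -> int) : \sum_(x in setT) f x = \sum_x f x.
Proof. by apply: eq_bigl => x; rewrite in_setT. Qed.

Lemma eqL F G : (forall x y, e x y -> F x y = G x y) -> Lsum F = Lsum G.
Proof.
move=> H; apply: eq_bigr => x _; apply: eq_bigr => y _.
by case E: (e x y); rewrite ?abF ?mul0r // H.
Qed.

Lemma LD F G : Lsum (fun x y => F x y + G x y) = Lsum F + Lsum G.
Proof. rewrite /Lsum -big_split; apply: eq_bigr => x _; rewrite -big_split; apply: eq_bigr => y _; exact: mulrDr. Qed.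
Lemma LN F : Lsum (fun x y => - F x y) = - Lsum F.
Proof. rewrite /Lsum -sumrN; apply: eq_bigr => x _; rewrite -sumrN; apply: eq_bigr => y _; ring. Qed.
Lemma LZ c F : Lsum (fun x y => c * F x y) = c * Lsum F.
Proof. rewrite /Lsum mulr_sumr; apply: eq_bigr => x _; rewrite mulr_sumr; apply: eq_bigr => y _; ring. Qed.
Lemma Lsym F : Lsum F = Lsum (fun x y => F y x).
Proof.
rewrite /Lsum exchange_big; apply: eq_bigr => x _; apply: eq_bigr => y _.
by rewrite esym.
Qed.

Lemma edge2 (F : T -> T -> nat) : (forall x y, F x y = F y x) ->
  2 * (edge_sum_in e setT F)%:Z = Lsum (fun x y => (F x y)%:Z).
Proof.
move=> Fs; have := handshake setT F Fs; move/(congr1 Posz).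
rewrite PoszM sumZ => ->; rewrite sumsetT; apply: eq_bigr => x _.
rewrite sumZ big_mkcond; apply: eq_bigr => y _; rewrite in_setT /=.
by case: (e x y); rewrite ?abT ?abF ?mul1r ?mul0r.
Qed.

Lemma Ld x : \sum_y ab (e x y) = d x.
Proof. by rewrite /d /deg deg_inZ sumsetT. Qed.
Lemma Ld' x : \sum_y ab (e y x) = d x.
Proof. by rewrite -Ld; apply: eq_bigr => y _; rewrite esym. Qed.
Lemma S' x : \sum_y ab (e y x) * d y = Sn x.
Proof. by apply: eq_bigr => y _; rewrite esym. Qed.

Lemma M1aZ k : (M1a e k)%:Z = \sum_x d x ^+ k.
Proof. by rewrite /M1a /M1a_in sumZ sumsetT; apply: eq_bigr => x _; rewrite PoszX. Qed.

Lemma L1 : Lsum (fun _ _ => 1) = 2 * (nedges e)%:Z.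
Proof. by rewrite /nedges /size_in edge2. Qed.
Lemma sumd : \sum_x d x = 2 * (nedges e)%:Z.
Proof. by rewrite -L1 /Lsum; apply: eq_bigr => x _; rewrite -Ld; apply: eq_bigr => y _; rewrite mulr1. Qed.
Lemma Ldx k : Lsum (fun x y => d x ^+ k) = (M1a e k.+1)%:Z.
Proof.
rewrite M1aZ /Lsum; apply: eq_bigr => x _; rewrite -mulr_suml Ld; by rewrite exprS.
Qed.
Lemma Ldy k : Lsum (fun x y => d y ^+ k) = (M1a e k.+1)%:Z.
Proof. by rewrite Lsym Ldx. Qed.
Lemma Ldd : Lsum (fun x y => d x * d y) = 2 * (M2 e)%:Z.
Proof. rewrite /M2 edge2; last by move=> *; rewrite mulnC. by apply: eqL => x y _; rewrite PoszM. Qed.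
Lemma Lalpha : Lsum (fun x y => d x * d y * (d x + d y)) = 2 * (alpha_idx e)%:Z.
Proof.
rewrite /alpha_idx edge2; last by move=> x y; rewrite [(deg e x * _)%N]mulnC addnC.
by apply: eqL => x y _; rewrite PoszM PoszM PoszD.
Qed.
Lemma LSx : Lsum (fun x y => Sn x) = 2 * (M2 e)%:Z.
Proof.
rewrite -Ldd /Lsum; apply: eq_bigr => x _; rewrite -mulr_suml Ld /Sn mulr_sumr.
by apply: eq_bigr => y _; ring.
Qed.
Lemma LSy : Lsum (fun x y => Sn y) = 2 * (M2 e)%:Z.
Proof. by rewrite Lsym LSx. Qed.

Lemma sumD (P : pred T) (f g : T -> int) :
  \sum_(i | P i) (f i + g i) = \sum_(i | P i) f i + \sum_(i | P i) g i.
Proof. exact: big_split. Qed.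

Lemma Lgamma : Lsum (fun x y => (Sn x + Sn y - d x - d y) * (d x + d y)) = 2 * (gamma_idx e)%:Z.
Proof.
rewrite /gamma_idx edge2; last first.
  move=> x y; rewrite addnC; apply: eq_bigl => v; rewrite /incident.
  by rewrite andbCA orbC.
apply: eqL => x y exy; rewrite sumZ big_mkcond /=.
have xy : x != y by apply/eqP => h; subst; rewrite eirr in exy.
have inc : forall v, ab (incident e v x y) = ab (e v x) + ab (e v y) - ab (v == x) - ab (v == y).
  move=> v; rewrite /incident.
  case: (eqVneq v x) => [->|vx].
    by rewrite (negbTE xy) /= eirr exy abT abF; ring.
  case: (eqVneq v y) => [->|vy].
    by rewrite /= eirr (esym y x) exy abT abF; ring.
  case evx: (e v x); case evy: (e v y); rewrite /= ?abT ?abF; try ring.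
  by have := girth x v y; rewrite (esym x v) evx evy exy => /(_ isT) /(_ isT).
have -> : \sum_v (if incident e v x y then ((deg e v * (deg e x + deg e y))%N)%:Z else 0)
  = \sum_v (ab (e v x) * d v * (d x + d y) + ab (e v y) * d v * (d x + d y)
            - ab (v == x) * (d v * (d x + d y)) - ab (v == y) * (d v * (d x + d y))).
  apply: eq_bigr => v _.
  have -> : (if incident e v x y then ((deg e v * (deg e x + deg e y))%N)%:Z else 0)
     = ab (incident e v x y) * (d v * (d x + d y)).
    by case: (incident e v x y); rewrite ?abT ?abF ?mul1r ?mul0r // PoszM PoszD.
  rewrite inc; ring.
rewrite !sumrB sumD -!mulr_suml !sum_eq1 !S'; ring.
Qed.

Lemma deg_cnt (D : {set T}) u :
  ((\sum_(w in D | e u w) 1)%N)%:Z = \sum_(w in D) ab (e u w).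
Proof.
rewrite sumZ big_mkcond [RHS]big_mkcond /=.
apply: eq_bigr => w _; by case: (w \in D); case: (e u w).
Qed.

Lemma sizeD x y : e x y ->
  (size_in e (~: [set x; y]))%:Z = (nedges e)%:Z + 1 - d x - d y.
Proof.
move=> exy; have xy : x != y by apply/eqP => h; subst; rewrite eirr in exy.
apply: (@mulfI _ 2) => //.
rewrite /size_in.
move/(congr1 Posz): (handshake (~: [set x; y]) (fun _ _ => 1%N) (fun _ _ => erefl)).
rewrite PoszM => ->.
rewrite sumZ.
under eq_bigr => u _ do rewrite deg_cnt sum_compl2 // Ld.
rewrite sum_compl2 // !sumrB sumd !Ld' !eirr exy (esym y x) exy abT abF; ring.
Qed.

Lemma M1D x y : e x y ->
  (M1a_in e 2 (~: [set x; y]))%:Z =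
  (M1 e)%:Z - d x ^+ 2 - d y ^+ 2 + 3 * d x + 3 * d y - 2 - 2 * Sn x - 2 * Sn y.
Proof.
move=> exy; have xy : x != y by apply/eqP => h; subst; rewrite eirr in exy.
rewrite /M1a_in sumZ.
under eq_bigr => v _ do rewrite PoszX deg_inZ sum_compl2 // Ld.
have sq : forall v, (d v - ab (e v x) - ab (e v y)) ^+ 2 =
   d v ^+ 2 + ab (e v x) + ab (e v y) - 2 * (ab (e v x) * d v) - 2 * (ab (e v y) * d v).
  move=> v; case evx: (e v x); case evy: (e v y); rewrite ?abT ?abF; try ring.
  by have := girth x v y; rewrite (esym x v) evx evy exy => /(_ isT) /(_ isT).
under eq_bigr => v _ do rewrite sq.
rewrite sum_compl2 // !sumrB !sumD -!mulr_sumr !S' !Ld' /M1 M1aZ.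
rewrite !eirr exy (esym y x) exy abT abF; ring.
Qed.

End S.

Arguments d {T} e x.
Arguments Sn {T} e x.
Arguments Lsum {T} e F.

Theorem lemma2p3 (T : finType) (e : rel T) :
  simple_graph e -> girth_ge4 e ->
  let m : int := (nedges e)%:Z in
  (rho1 e)%:Z =
    (m ^+ 2 + 4 * m + 5) * (M1 e)%:Z - (m + 2) * (Fidx e)%:Z
    - (4 * m + 6) * (M2 e)%:Z + (M1a e 4)%:Z - (M1 e)%:Z ^+ 2
    + (alpha_idx e)%:Z - 2 * m ^+ 2 - 2 * m + 2 * (gamma_idx e)%:Z.
Proof.
move=> [esym eirr] girth m.
apply: (@mulfI _ 2) => //.
rewrite /rho1 edge2 //; last by move=> x y; rewrite setUC.
set M1z := (M1 e)%:Z.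
rewrite (@eqL _ _ _ (fun x y =>
   ((m + 1) * (M1z - 2)) * 1 + (3 * (m + 1) - M1z + 2) * d e x ^+ 1
   + (3 * (m + 1) - M1z + 2) * d e y ^+ 1
   - (m + 2) * d e x ^+ 2 - (m + 2) * d e y ^+ 2 - 2 * (d e x * d e y)
   - 2 * (m + 1) * Sn e x - 2 * (m + 1) * Sn e y
   + d e x * d e y * (d e x + d e y) + d e x ^+ 3 + d e y ^+ 3
   + 2 * ((Sn e x + Sn e y - d e x - d e y) * (d e x + d e y)))); last first.
  move=> x y exy; rewrite PoszM sizeD // M1D //.
  rewrite /M1z /m; ring.
rewrite !(LD, LN, LZ).
rewrite L1 // !Ldx !Ldy // Ldd //.
rewrite LSx // LSy // Lalpha // Lgamma //.
rewrite /M1z /m /M1 /Fidx; ring.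
Qed.
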